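(* Let $f:X\to Y$ be a continuous surjective open map between compact Hausdorff spaces. Then $Hf:HX\to HY$ has a degenerate fiber (a fiber $(Hf)^{-1}(\nu)$ that is a single point) if and only if $f$ has a degenerate fiber (a fiber $f^{-1}(y)$ that is a single point).
   Context: For a compact Hausdorff space $X$, let $HM(X)$ be the set of all maps $\alpha:[0,1)\to X$ for which there exist $0=t_0<t_1<\dots<t_n=1$ such that $\alpha$ is constant on each $[t_i,t_{i+1})$. Let $C(X)$ be the set of continuous real-valued functions on $X$. For $\varphi\in C(X)$ and $0\le a<b\le 1$ define $\varphi_{(a,b)}:HM(X)\to\mathbb{R}$ by $\varphi_{(a,b)}(\alpha)=\frac{1}{b-a}\int_a^b\varphi(\alpha(t))\,dt$, and let $S_{HM}(X)$ be the set of all such functions. The map $\alpha\mapsto(\varphi_{(a,b)}(\alpha))$ embeds $HM(X)$ into the product $\prod_{\varphi_{(a,b)}\in S_{HM}(X)}[\min\varphi,\max\varphi]$; $HX$ is the closure of the image of $HM(X)$, and $p_{\varphi_{(a,b)}}:HX\to\mathbb{R}$ is the coordinate projection. For continuous $f:X\to Y$, $Hf:HX\to HY$ is the unique continuous map with $p_{\varphi_{(a,b)}}\circ Hf=p_{(\varphi\circ f)_{(a,b)}}$ for all $\varphi\in C(Y)$, $0\le a<b\le1$ (it extends $\alpha\mapsto f\circ\alpha$). *)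

(* Defs.v *)
From HB Require Import structures.
From mathcomp Require Import all_boot all_order all_algebra.
From mathcomp Require Import all_classical all_reals all_analysis.
From mathcomp Require Import Rstruct Rstruct_topology.
Set Implicit Arguments. Unset Strict Implicit. Unset Printing Implicit Defensive.
Import Order.TTheory GRing.Theory Num.Theory.
Local Open Scope classical_set_scope.
Local Open Scope ring_scope.

Notation RR := Rdefinitions.R.

(* HM(X): maps alpha : [0,1) -> X that are step functions: there is a
   partition 0 = t_0 < ... < t_n = 1 with alpha constant on each [t_i,t_{i+1}).
   We represent alpha by a function RR -> X; only its values on [0,1) matter. *)
Definition is_HM (X : Type) (alpha : RR -> X) : Prop :=
  exists (n : nat) (t : nat -> RR),
    t 0%N = 0 /\ t n = 1 /\ (forall i, (i < n)%N -> t i < t i.+1) /\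
    (forall i, (i < n)%N -> forall s, t i <= s < t i.+1 -> alpha s = alpha (t i)).

Definition SHM (X : topologicalType) :=
  { p : (X -> RR) * RR * RR |
    continuous p.1.1 /\ [/\ 0 <= p.1.2, p.1.2 < p.2 & p.2 <= 1] }.

Definition avg (X : topologicalType) (phi : X -> RR) (a b : RR) (alpha : RR -> X) : RR :=
  (b - a)^-1 * Rintegral (@lebesgue_measure RR) `[a, b] (fun t => phi (alpha t)).

Definition Hembed (X : topologicalType) (alpha : RR -> X) : {ptws SHM X -> RR} :=
  fun i => avg (sval i).1.1 (sval i).1.2 (sval i).2 alpha.

(* Since each factor
   [min phi, max phi] is closed in R and contains the image, this equals the
   closure taken inside prod [min phi, max phi]. *)
Definition HX (X : topologicalType) : set {ptws SHM X -> RR} :=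
  closure [set Hembed alpha | alpha in is_HM (X:=X)].

Definition SHM_map (X Y : topologicalType) (f : X -> Y) (hf : continuous f)
  (i : SHM Y) : SHM X :=
  let: exist p hp := i in
  exist _ (p.1.1 \o f, p.1.2, p.2)
    (conj (fun x => continuous_comp (hf x) (proj1 hp (f x))) (proj2 hp)).

Definition Hf (X Y : topologicalType) (f : X -> Y) (hf : continuous f)
  (nu : {ptws SHM X -> RR}) : {ptws SHM Y -> RR} :=
  fun i => nu (SHM_map hf i).
Arguments HX : clear implicits.

(* Main.v *)
Require Import Defs.
From HB Require Import structures.
From mathcomp Require Import all_boot all_order all_algebra.
From mathcomp Require Import all_classical all_reals all_analysis.
From mathcomp Require Import Rstruct Rstruct_topology.
From mathcomp Require Import lra ring.
Set Warnings "-all".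
Set Implicit Arguments. Unset Strict Implicit. Unset Printing Implicit Defensive.
Import Order.TTheory GRing.Theory Num.Theory.
Import numFieldNormedType.Exports.
Local Open Scope classical_set_scope.
Local Open Scope ring_scope.

Notation mu := (@lebesgue_measure RR).
Notation MR := (measurableTypeR RR).

Section Step.
Variables (X : Type) (alpha : RR -> X) (n : nat) (t : nat -> RR).
Hypotheses (t0 : t 0%N = 0) (tn : t n = 1)
  (tinc : forall i, (i < n)%N -> t i < t i.+1)
  (tcst : forall i, (i < n)%N -> forall s, t i <= s < t i.+1 -> alpha s = alpha (t i)).

Lemma step_cover s : 0 <= s < 1 -> exists i, (i < n)%N /\ t i <= s < t i.+1.
Proof.
move=> /andP[s0 s1].
have : forall k, (k <= n)%N -> t (n - k)%N <= s ->
  exists i, (i < n)%N /\ t i <= s < t i.+1.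
  elim=> [|k IH] kn hk.
    by move: hk; rewrite subn0 tn leNgt s1.
  have [hs|hs] := leP (t (n - k)%N) s.
    by apply: IH => //; apply: ltnW.
  exists (n - k.+1)%N; split; first by rewrite subnS prednK ?leq_subr // subn_gt0.
  rewrite hk /= (_ : (n - k.+1).+1 = n - k)%N //.
  by rewrite subnS prednK // subn_gt0.
by move/(_ n (leqnn n)); rewrite subnn t0; apply.
Qed.

Definition pieces (i : nat) : set MR :=
  if (i < n)%N then [set` `[t i, t i.+1[] else [set 1].

Lemma pieces_meas i : measurable (pieces i).
Proof. rewrite /pieces; case: ifP => _ //; exact: measurable_itv. Qed.

Lemma pieces_cover : ([set` `[0, 1]] : set MR) `<=` \bigcup_i pieces i.
Proof.
move=> s; rewrite /= in_itv /= => /andP[s0 s1].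
have [->|sl] := eqVneq s 1.
  by exists n => //; rewrite /pieces ltnn.
have [i [iN hi]] : exists i, (i < n)%N /\ t i <= s < t i.+1.
  by apply: step_cover; rewrite s0 /= lt_neqAle sl s1.
by exists i => //; rewrite /pieces iN /= in_itv /=.
Qed.

Lemma step_meas (g : X -> RR) : measurable_fun ([set` `[0, 1]] : set MR) ((g \o alpha) : MR -> MR).
Proof.
apply: (measurable_funS _ pieces_cover).
  by apply: bigcupT_measurable => i; exact: pieces_meas.
apply/(measurable_fun_bigcup (E:=pieces) _ pieces_meas) => i.
rewrite /pieces; case: ifPn => iN.
  apply: (@eq_measurable_fun _ _ MR MR _ (cst (g (alpha (t i))))); last exact: measurable_cst.
  by move=> s; rewrite inE /= in_itv /= => hs; rewrite (tcst iN hs).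
apply: (@eq_measurable_fun _ _ MR MR _ (cst (g (alpha 1)))); last exact: measurable_cst.
by move=> s; rewrite inE /= => ->.
Qed.


Lemma step_bound (g : X -> RR) : exists B, forall s, 0 <= s <= 1 -> `|g (alpha s)| <= B.
Proof.
exists (\sum_(i < n) `|g (alpha (t i))| + `|g (alpha 1)|) => s hs.
have /pieces_cover [i _] : ([set` `[0, 1]] : set MR) s by rewrite /= in_itv.
rewrite /pieces; case: ifPn => iN.
  rewrite /= in_itv /= => /(tcst iN) ->.
  rewrite (bigD1 (@Ordinal n i iN)) //=.
  have : 0 <= \sum_(j < n | j != @Ordinal n i iN) `|g (alpha (t j))|.
    by apply: sumr_ge0 => j _; exact: normr_ge0.
  have := normr_ge0 (g (alpha 1)).
  lra.
move=> /= ->.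
have : 0 <= \sum_(j < n) `|g (alpha (t j))|.
  by apply: sumr_ge0 => j _; exact: normr_ge0.
lra.
Qed.

Lemma step_int (g : X -> RR) a b : 0 <= a -> b <= 1 ->
  mu.-integrable ([set` `[a, b]] : set MR) (EFin \o (g \o alpha)).
Proof.
move=> a0 b1; apply: measurable_bounded_integrable.
- exact: measurable_itv.
- have := @lebesgue_measure_itv RR `[a, b]; rewrite /= => ->; case: ifP => _ //; exact: ltry.
- apply: (measurable_funS _ _ (step_meas g)); first exact: measurable_itv.
  move=> s; rewrite /= !in_itv /= => /andP[h1 h2].
  by rewrite (le_trans a0 h1) (le_trans h2 b1).
- have [B hB] := step_bound g.
  exists B; split; first exact: num_real.
  move=> M BM s; rewrite /= in_itv /= => /andP[h1 h2].
  apply: (le_trans (hB s _)); last exact: ltW.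
  by rewrite (le_trans a0 h1) (le_trans h2 b1).
Qed.

End Step.


Lemma HM_int (X : Type) (alpha : RR -> X) (g : X -> RR) a b : is_HM alpha ->
  0 <= a -> b <= 1 ->
  mu.-integrable ([set` `[a, b]] : set MR) (EFin \o (fun s => g (alpha s))).
Proof.
move=> [n [t [t0 [tn [tinc tcst]]]]] a0 b1.
exact: (step_int t0 tn tcst).
Qed.

Lemma avg_lin (X : topologicalType) (alpha : RR -> X) (g1 g2 : X -> RR) c1 c2 a b :
  is_HM alpha -> 0 <= a -> b <= 1 ->
  avg (fun x => c1 * g1 x + c2 * g2 x) a b alpha =
  c1 * avg g1 a b alpha + c2 * avg g2 a b alpha.
Proof.
move=> hal a0 b1; rewrite /avg.
rewrite RintegralD; first last.
- exact: (HM_int (fun x => c2 * g2 x)).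
- exact: (HM_int (fun x => c1 * g1 x)).
- exact: measurable_itv.
rewrite !RintegralZl; first ring.
- exact: measurable_itv.
- exact: HM_int.
- exact: measurable_itv.
- exact: HM_int.
Qed.

Lemma avg_le (X : topologicalType) (alpha : RR -> X) (g1 g2 : X -> RR) a b :
  is_HM alpha -> 0 <= a -> a < b -> b <= 1 -> (forall x, g1 x <= g2 x) ->
  avg g1 a b alpha <= avg g2 a b alpha.
Proof.
move=> hal a0 ab b1 h; rewrite /avg ler_wpM2l //.
  by rewrite invr_ge0 subr_ge0 ltW.
apply: (@le_Rintegral _ MR RR mu); last by move=> *; exact: h.
- exact: measurable_itv.
- exact: HM_int.
- exact: HM_int.
Qed.

Lemma avg_cst (X : topologicalType) (alpha : RR -> X) c a b : a < b ->
  avg (fun _ => c) a b alpha = c.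
Proof.
move=> ab; rewrite /avg Rintegral_cst; last exact: measurable_itv.
have := @lebesgue_measure_itv RR `[a, b]; rewrite /= => ->.
rewrite ifT /=; last by [].

have : b - a != 0 by rewrite subr_eq0 gt_eqF.
move=> h; field; exact: h.
Qed.

Definition SHMe (X : topologicalType) := SHM X.
HB.instance Definition _ X := gen_eqMixin (SHMe X).

Lemma coord_cont (X : topologicalType) (i : SHM X) :
  continuous (fun m : {ptws SHM X -> RR} => m i).
Proof. exact: (@proj_continuous (SHMe X) (fun _ => RR) i). Qed.

Lemma box_compact (X : topologicalType) (B : SHM X -> RR) :
  compact [set m : {ptws SHM X -> RR} | forall i, `|m i| <= B i].
Proof.
have := @tychonoff (SHMe X) (fun _ => RR) (fun i => [set r : RR | `|r| <= B i]).
apply => i.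
rewrite (_ : [set r : RR | `|r| <= B i] = [set` `[- B i, B i]]).
  exact: segment_compact.
by apply/seteqP; split => r /=; rewrite in_itv /= ler_norml.
Qed.

Lemma lin_cont (T : topologicalType) (g1 g2 : T -> RR) c1 c2 :
  continuous g1 -> continuous g2 -> continuous (fun x => c1 * g1 x + c2 * g2 x).
Proof.
move=> h1 h2 x.
apply: (@cvgD _ RR^o _ _ _ (fun x => c1 * g1 x) (fun x => c2 * g2 x)).
  apply: cvgM; [exact: cvg_cst|exact: h1].
apply: cvgM; [exact: cvg_cst|exact: h2].
Qed.

Definition valid (a b : RR) := [/\ 0 <= a, a < b & b <= 1].

Definition ev (X : topologicalType) (m : {ptws SHM X -> RR}) (g : X -> RR) (a b : RR) : RR :=
  match pselect (continuous g /\ [/\ 0 <= a, a < b & b <= 1]) with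
  | left p => m (exist _ (g, a, b) p) | right _ => 0 end.

Lemma evE (X : topologicalType) (m : {ptws SHM X -> RR}) g a b p :
  ev m g a b = m (exist _ (g, a, b) p).
Proof.
rewrite /ev; case: pselect => [q|]; last by [].
by rewrite (Prop_irrelevance p q).
Qed.

Lemma ev_embed (X : topologicalType) (alpha : RR -> X) g a b :
  continuous g -> valid a b -> ev (Hembed alpha) g a b = avg g a b alpha.
Proof. by move=> cg vab; rewrite (evE _ (conj cg vab)). Qed.

Lemma ev_cont (X : topologicalType) g a b :
  continuous g -> valid a b -> continuous (fun m : {ptws SHM X -> RR} => ev m g a b).
Proof.
move=> cg vab.
rewrite (_ : (fun m => ev m g a b) = (fun m : {ptws SHM X -> RR} => m (exist _ (g, a, b) (conj cg vab)))).
  exact: coord_cont.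
by apply: funext => m; exact: evE.
Qed.

Lemma HX_closedP (X : topologicalType) (F : {ptws SHM X -> RR} -> RR) (C : set RR) :
  continuous F -> closed C -> (forall alpha, is_HM alpha -> C (F (Hembed alpha))) ->
  forall m, HX X m -> C (F m).
Proof.
move=> cF cC h m hm.
have cl : closed (F @^-1` C) by apply: preimage_closed => // x _; exact: cF.
suff sub : HX X `<=` F @^-1` C by exact: sub _ hm.
rewrite /HX ((closure_id _).1 cl).
apply: closureS => _ [alpha ha <-]; exact: h.
Qed.

Lemma lin3_cont (T : topologicalType) (A B C : T -> RR) c1 c2 :
  continuous A -> continuous B -> continuous C ->
  continuous (fun m => A m - (c1 * B m + c2 * C m)).
Proof.
move=> hA hB hC.
rewrite (_ : (fun m => A m - (c1 * B m + c2 * C m)) =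
   (fun m => 1 * A m + (-1) * (c1 * B m + c2 * C m))).
  by apply: lin_cont => //; exact: lin_cont.
by apply: funext => m; ring.
Qed.

Section HXprops.
Variables (X : topologicalType) (m : {ptws SHM X -> RR}) (hm : HX X m).

Lemma HX_lin (g1 g2 : X -> RR) c1 c2 a b : continuous g1 -> continuous g2 -> valid a b ->
  ev m (fun x => c1 * g1 x + c2 * g2 x) a b = c1 * ev m g1 a b + c2 * ev m g2 a b.
Proof.
move=> h1 h2 vab.
have cl := lin_cont (c1:=c1) (c2:=c2) h1 h2.
suff : (fun r : RR => r = 0)
   ((fun m => ev m (fun x => c1 * g1 x + c2 * g2 x) a b - (c1 * ev m g1 a b + c2 * ev m g2 a b)) m).
  by move/eqP; rewrite subr_eq0 => /eqP.
apply: (@HX_closedP X (fun m => ev m (fun x => c1 * g1 x + c2 * g2 x) a b - (c1 * ev m g1 a b + c2 * ev m g2 a b)) (fun r : RR => r = 0)) hm.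
- by apply: lin3_cont; apply: ev_cont.
- exact: closed_eq.
- move=> alpha ha /=; rewrite !ev_embed //.
  case: vab => a0 ab b1; rewrite avg_lin //; exact: subrr.
Qed.

Lemma HX_le (g1 g2 : X -> RR) a b : continuous g1 -> continuous g2 -> valid a b ->
  (forall x, g1 x <= g2 x) -> ev m g1 a b <= ev m g2 a b.
Proof.
move=> h1 h2 vab h.
suff : (fun r : RR => 0 <= r)
   ((fun m => ev m g2 a b - (1 * ev m g1 a b + 0 * ev m g1 a b)) m).
  by rewrite /= mul1r mul0r addr0 subr_ge0.
apply: (@HX_closedP X (fun m => ev m g2 a b - (1 * ev m g1 a b + 0 * ev m g1 a b)) (fun r : RR => 0 <= r)) hm.
- by apply: lin3_cont; apply: ev_cont.
- exact: closed_ge.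
- move=> alpha ha /=; rewrite !ev_embed // mul1r mul0r addr0 subr_ge0.
  case: vab => a0 ab b1; exact: avg_le.
Qed.

Lemma HX_cst c a b : valid a b -> ev m (fun _ => c) a b = c.
Proof.
move=> vab.
have cc : continuous (fun _ : X => c) by move=> x; exact: cvg_cst.
apply: (@HX_closedP X (fun m => ev m (fun _ => c) a b) (fun r => r = c)) hm.
- exact: ev_cont.
- exact: closed_eq.
- move=> alpha ha /=; rewrite ev_embed //; case: vab => _ ab _; exact: avg_cst.
Qed.

End HXprops.

Lemma HM_cst (X : Type) (x : X) : is_HM (fun _ : RR => x).
Proof.
exists 1%N, (fun i => i%:R); split; first by rewrite /= mulr0n.
split; first by rewrite /= mulr1n.
split; last by [].
by move=> i; rewrite ltnS leqn0 => /eqP ->; rewrite /= mulr0n mulr1n ltr01.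
Qed.

Lemma HM_comp (X Y : Type) (s : X -> Y) (alpha : RR -> X) :
  is_HM alpha -> is_HM (s \o alpha).
Proof.
move=> [n [t [t0 [tn [tinc tcst]]]]]; exists n, t; do 3 (split => //).
by move=> i iN u hu /=; rewrite (tcst i iN u hu).
Qed.

Lemma ev_Hf (X Y : topologicalType) (f : X -> Y) (hf : continuous f)
  (m : {ptws SHM X -> RR}) phi a b : continuous phi -> valid a b ->
  ev (Hf hf m) phi a b = ev m (phi \o f) a b.
Proof.
move=> cphi vab; rewrite (evE _ (conj cphi vab)) /Hf /SHM_map /=.
have cpf : continuous (phi \o f) by move=> x; exact: continuous_comp (hf x) (cphi (f x)).
rewrite (evE _ (conj cpf vab)); congr (m _); congr exist; exact: Prop_irrelevance.
Qed.

Lemma ev_ext (X : topologicalType) (m1 m2 : {ptws SHM X -> RR}) :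
  (forall g a b, continuous g -> valid a b -> ev m1 g a b = ev m2 g a b) -> m1 = m2.
Proof.
move=> h; apply: funext => -[[[g a] b] [cg vab]].
by rewrite -(evE _ (conj cg vab)) -(evE _ (conj cg vab)) h.
Qed.

Lemma cont_bound (X : topologicalType) (cX : compact [set: X]) (g : X -> RR) :
  continuous g -> exists B, forall x, `|g x| <= B.
Proof.
move=> cg.
have [[x0 _]|ne] := pselect ([set: X] !=set0); last first.
  by exists 0 => x; exfalso; apply: ne; exists x.
have cn : continuous (fun x => `|g x|).
  move=> x; apply: continuous_comp; first exact: cg.
  exact: (@norm_continuous _ RR^o).
have [c _ hc] := compact_EVT_max (f := fun x => `|g x|) (ex_intro _ x0 I) cX
  (continuous_subspaceT cn).
by exists `|g c| => x; apply: hc; rewrite inE.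
Qed.

Lemma urysohn_RR (T : topologicalType) (hT : hausdorff_space T) (cT : compact [set: T])
  (A B : set T) : closed A -> closed B -> A `&` B = set0 ->
  exists g : T -> RR, [/\ continuous g, (forall z, 0 <= g z <= 1),
     (forall z, A z -> g z = 0) & (forall z, B z -> g z = 1)].
Proof.
move=> cA cB AB.
have us := (@normal_separatorP RR T).1 (compact_normal hT cT) A B cA cB AB.
have [g [cg rg g0 g1]] := (@uniform_separatorP T RR A B).1 us.
exists g; split => //.
- move=> z; have := rg (g z) (ex_intro2 _ _ z I erefl).
  by rewrite /= in_itv.
- by move=> z Az; exact: (g0 (g z) (ex_intro2 _ _ z Az erefl)).
- by move=> z Bz; exact: (g1 (g z) (ex_intro2 _ _ z Bz erefl)).
Qed.

Lemma closed_set1_h (T : topologicalType) (hT : hausdorff_space T) (y : T) : closed [set y].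
Proof. exact: accessible_closed_set1 (hausdorff_accessible hT) y. Qed.

Lemma cont_absB (T : topologicalType) (psi : T -> RR) c :
  continuous psi -> continuous (fun z => `|psi z - c|).
Proof.
move=> cpsi.
have h : continuous (fun z => psi z - c).
  move=> z; apply: (@cvgB _ RR^o _ _ _ psi (fun=> c)); [exact: cpsi|exact: cvg_cst].
move=> x.
exact: (@continuous_comp _ _ _ (fun z => psi z - c) (fun r : RR^o => `|r|) x (h x)
  (@norm_continuous _ RR^o _)).
Qed.

Lemma comp_cont (X Y : topologicalType) (f : X -> Y) (phi : Y -> RR) :
  continuous f -> continuous phi -> continuous (phi \o f).
Proof.
move=> hf cphi z.
exact: (@continuous_comp _ _ _ f phi z (hf z) (cphi (f z))).
Qed.

Section Dir1.
Variables (X Y : topologicalType) (f : X -> Y) (hf : continuous f).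
Hypotheses (cX : compact [set: X]) (hX : hausdorff_space X)
  (cY : compact [set: Y]) (hY : hausdorff_space Y).
Variables (y : Y) (x : X) (fib : f @^-1` [set y] = [set x]).

Lemma dir1_eval (m : {ptws SHM X -> RR}) : HX X m ->
  Hf hf m = Hembed (fun _ : RR => y) ->
  forall psi a b, continuous psi -> valid a b -> ev m psi a b = psi x.
Proof.
move=> hm hfm psi a b cpsi vab.
have key : forall e, 0 < e -> `|ev m psi a b - psi x| <= e.
  move=> e e0.
  pose K := [set z | e <= `|psi z - psi x|].
  have cK : closed K.
    apply: (@preimage_closed _ _ (fun z => `|psi z - psi x|) [set r : RR | e <= r]); last exact: closed_ge.
    move=> z _; exact: cont_absB.
  have kK : compact K by apply: (subclosed_compact cK cX).
  have cfK : closed (f @` K).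
    apply: compact_closed => //; apply: continuous_compact => //.
    exact: continuous_subspaceT.
  have dis : [set y] `&` (f @` K) = set0.
    apply/seteqP; split => // z [/= -> [k Kk fk]].
    have : (f @^-1` [set y]) k by [].
    rewrite fib => /= kx; move: Kk; rewrite /K /= kx subrr normr0 => h.
    by move: (lt_le_trans e0 h); rewrite ltxx.
  have [phi [cphi phi01 phi0 phi1]] := urysohn_RR hY cY (@closed_set1_h _ hY y) cfK dis.
  have [B hB] := cont_bound cX cpsi.
  have cphif := comp_cont hf cphi.
  have c1 : continuous (fun _ : X => (1 : RR)) by move=> z; exact: cvg_cst.
  have evphi : ev m (phi \o f) a b = 0.
    rewrite -ev_Hf // hfm ev_embed //; case: vab => _ ab _.
    have := avg_cst (fun _ : RR => y) (phi y) ab; rewrite /avg /= => ->.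
    exact: phi0.
  have ev1 : ev m (fun _ => 1) a b = 1 by exact: HX_cst.
  have pw : forall z, `|psi z - psi x| <= e + 2 * B * phi (f z).
    move=> z; have [Kz|nKz] := pselect (K z).
      rewrite phi1; last by exists z.
      have := hB z; have := hB x; have := ler_normB (psi z) (psi x).
      have := normr_ge0 (psi x); lra.
    case/andP: (phi01 (f z)) => p0 _; move: nKz; rewrite /K /= => /negP; rewrite -ltNge => h.
    have B0 : 0 <= B by apply: le_trans (hB x).
    have : 0 <= 2 * B * phi (f z) by rewrite mulr_ge0 // mulr_ge0.
    lra.
  have up : ev m psi a b <= (psi x + e) * ev m (fun _ => 1) a b + (2 * B) * ev m (phi \o f) a b.
    rewrite -HX_lin //; apply: HX_le => //; first exact: lin_cont.
    move=> z /=; have := pw z; rewrite ler_norml => /andP[_]; lra.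
  have lo : (psi x - e) * ev m (fun _ => 1) a b + (- (2 * B)) * ev m (phi \o f) a b <= ev m psi a b.
    rewrite -HX_lin //; apply: HX_le => //; first exact: lin_cont.
    move=> z /=; have := pw z; rewrite ler_norml => /andP[h _]; lra.
  move: up lo; rewrite evphi ev1 ler_norml; lra.
apply/eqP; rewrite -subr_eq0 -normr_eq0 eq_le normr_ge0 andbT.
apply/ler_addgt0Pr => e e0; rewrite add0r; exact: key.
Qed.


Lemma avg_cpath (Z : topologicalType) (g : Z -> RR) (z : Z) a b : a < b ->
  avg g a b (fun _ : RR => z) = g z.
Proof. by move=> ab; have := avg_cst (fun _ : RR => z) (g z) ab; rewrite /avg /=. Qed.

Lemma dir1 : exists nu, HX Y nu /\
      exists mu, [set m | HX X m /\ Hf hf m = nu] = [set mu].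
Proof.
have fx : f x = y.
  have : (f @^-1` [set y]) x by rewrite fib.
  by [].
exists (Hembed (fun _ : RR => y)); split.
  by apply: subset_closure; exists (fun _ : RR => y) => //; exact: HM_cst.
exists (Hembed (fun _ : RR => x)); apply/seteqP; split => m /=.
  move=> [hm hfm]; apply: ev_ext => g a b cg vab.
  rewrite (dir1_eval hm hfm cg vab) ev_embed //.
  by case: vab => _ ab _; rewrite avg_cpath.
move=> ->; split.
  by apply: subset_closure; exists (fun _ : RR => x) => //; exact: HM_cst.
apply: ev_ext => g a b cg vab.
rewrite ev_Hf // !ev_embed //; last exact: comp_cont.
by case: vab => _ ab _; rewrite !avg_cpath //= fx.
Qed.

End Dir1.

Section Dir2.
Variables (X Y : topologicalType) (f : X -> Y) (hf : continuous f).
Hypotheses (cX : compact [set: X]) (hX : hausdorff_space X)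
  (cY : compact [set: Y]) (hY : hausdorff_space Y)
  (fopen : forall A : set X, open A -> open (f @` A)).

Lemma max_sel (psi : X -> RR) : continuous psi ->
  exists s : X -> X, forall x, f (s x) = f x /\ forall z, f z = f x -> psi z <= psi (s x).
Proof.
move=> cpsi.
suff [s hs] : {s : X -> X & forall x, f (s x) = f x /\ forall z, f z = f x -> psi z <= psi (s x)}.
  by exists s.
apply: (@choice X X (fun x sx => f sx = f x /\ forall z, f z = f x -> psi z <= psi sx)) => x; pose A := f @^-1` [set f x].
have cA : closed A.
  apply: preimage_closed; last exact: closed_set1_h.
  by move=> z _; exact: hf.
have kA : compact A by apply: (subclosed_compact cA cX).
have [c cA' hc] := compact_EVT_max (f := psi) (ex_intro _ x erefl) kA (continuous_subspaceT cpsi).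
exists c; split; first by move: cA'; rewrite inE.
by move=> z fz; apply: hc; rewrite inE.
Qed.

Lemma max_cont (psi : X -> RR) (s : X -> X) : continuous psi ->
  (forall x, f (s x) = f x /\ forall z, f z = f x -> psi z <= psi (s x)) ->
  continuous (psi \o s).
Proof.
move=> cpsi hs x0; apply/(@cvgrPdist_lt _ RR^o) => e e0.
set M0 := psi (s x0).
pose V := psi @^-1` [set r | M0 - e < r].
have oV : open V by apply: open_comp; [move=> z _; exact: cpsi|exact: open_gt].
pose W1 := f @^-1` (f @` V).
have n1 : nbhs x0 W1.
  apply: open_nbhs_nbhs; split.
    by apply: open_comp; [move=> z _; exact: hf|exact: fopen].
  exists (s x0); last exact: (hs x0).1.
  by rewrite /V /= ltrBlDr ltrDl.
pose K := psi @^-1` [set r | M0 + e <= r].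
have cK : closed K by apply: preimage_closed; [move=> z _; exact: cpsi|exact: closed_ge].
have cfK : closed (f @` K).
  apply: compact_closed => //; apply: continuous_compact.
    exact: continuous_subspaceT.
  exact: (subclosed_compact cK cX).
pose W2 := f @^-1` (~` (f @` K)).
have n2 : nbhs x0 W2.
  apply: open_nbhs_nbhs; split.
    by apply: open_comp; [move=> z _; exact: hf|exact: closed_openC].
  move=> [k Kk fk]; move: Kk; rewrite /K /=.
  have := (hs x0).2 k fk; rewrite -/M0 => h1 h2.
  have : M0 + e <= M0 by apply: le_trans h2 h1.
  by rewrite gerDl leNgt e0.
apply: filterS (filterI n1 n2) => z [[v Vv fv] h2] /=.
have lo : M0 - e < psi (s z).
  apply: lt_le_trans Vv _; apply: (hs z).2; exact: fv.
have up : psi (s z) < M0 + e.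
  rewrite ltNge; apply/negP => h; apply: h2.
  by exists (s z); [exact: h|exact: (hs z).1].
rewrite -/M0 ltr_norml; apply/andP; split; lra.
Qed.

End Dir2.

Lemma avg_bound (X : topologicalType) (alpha : RR -> X) g a b B :
  is_HM alpha -> valid a b -> (forall x, `|g x| <= B) -> `|avg g a b alpha| <= B.
Proof.
move=> ha [a0 ab b1] hB; rewrite ler_norml; apply/andP; split.
  rewrite -{1}(avg_cst alpha (- B) ab); apply: avg_le => // x.
  by have := hB x; rewrite ler_norml => /andP[].
rewrite -[X in _ <= X](avg_cst alpha B ab); apply: avg_le => // x.
by have := hB x; rewrite ler_norml => /andP[].
Qed.

Lemma twin (X : topologicalType) (cX : compact [set: X]) (mu : {ptws SHM X -> RR})
  (hmu : HX X mu) (s : X -> X) :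
  exists mu', HX X mu' /\ forall j j' : SHM X,
    (forall alpha, is_HM alpha -> Hembed (s \o alpha) j = Hembed alpha j') -> mu' j = mu j'.
Proof.
have [B hB] : {B : SHM X -> RR & forall i alpha, is_HM alpha -> `|Hembed alpha i| <= B i}.
  apply: (@choice (SHM X) RR (fun i b => forall alpha, is_HM alpha -> `|Hembed alpha i| <= b)).
  move=> [[[g a] b] [cg vab]].
  have [Bg hBg] := cont_bound cX cg.
  by exists Bg => alpha ha; exact: avg_bound.
pose P (U : set {ptws SHM X -> RR}) : set (RR -> X) := [set alpha | is_HM alpha /\ U (Hembed alpha)].
pose F := filter_from (nbhs mu) P.
have FF : Filter F.
  apply: filter_from_filter; first by exists setT; exact: filterT.
  move=> U V nU nV; exists (U `&` V); first exact: filterI.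
  by move=> alpha [ha [hU hV]]; split; split.
have PF : ProperFilter F.
  apply: filter_from_proper => U nU.
  have [m [[alpha ha <-] hU]] := hmu U nU.
  by exists alpha.
pose h := fun alpha : RR -> X => Hembed (s \o alpha).
pose G := h @ F.
have Gbox : G [set m : {ptws SHM X -> RR} | forall i, `|m i| <= B i].
  exists setT; first exact: filterT.
  move=> alpha [ha _] i; apply: hB; exact: HM_comp.
have [mu' [_ clu]] := @box_compact X B G _ Gbox.
exists mu'; split.
  move=> V nV.
  have GE : G [set Hembed alpha | alpha in is_HM (X:=X)].
    exists setT; first exact: filterT.
    by move=> alpha [ha _]; exists (s \o alpha) => //; exact: HM_comp.
  exact: clu _ _ GE nV.
move=> j j' hjj'.
have [G' PG' [G'mu' GG']] : exists2 G', ProperFilter G' & G' --> mu' /\ G `<=` G'.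
  by move: clu; rewrite cluster_cvgE.
have c1 : (fun m : {ptws SHM X -> RR} => m j) @ G' --> mu' j.
  move=> W nW; apply: G'mu'; exact: (@coord_cont X j mu' _ nW).
have c2 : (fun m : {ptws SHM X -> RR} => m j) @ G' --> mu j'.
  move=> W nW; apply: GG'.
  exists [set m : {ptws SHM X -> RR} | W (m j')]; first exact: (@coord_cont X j' mu _ nW).
  by move=> alpha [ha hW] /=; rewrite /h hjj'.
exact: (@cvg_unique RR (@norm_hausdorff _ RR^o) ((fun m : {ptws SHM X -> RR} => m j) @ G') _ (mu' j) (mu j') c1 c2).
Qed.

Lemma scale_cont (T : topologicalType) (u : T -> RR) c :
  continuous u -> continuous (fun z => c * u z).
Proof.
move=> cu; rewrite (_ : (fun z => c * u z) = (fun z => c * u z + 0 * u z)).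
  exact: lin_cont.
by apply: funext => z; rewrite mul0r addr0.
Qed.

Lemma sum_cont (T : topologicalType) (I : Type) (l : seq I) (F : I -> T -> RR) :
  (forall i, continuous (F i)) -> continuous (fun z => \sum_(i <- l) F i z).
Proof.
move=> cF; elim: l => [|i l IH].
  rewrite (_ : (fun z => \sum_(i <- [::]) F i z) = fun _ => 0).
    by move=> z; exact: cvg_cst.
  by apply: funext => z; rewrite big_nil.
rewrite (_ : (fun z => \sum_(j <- i :: l) F j z) = fun z => 1 * F i z + 1 * \sum_(j <- l) F j z).
  exact: lin_cont.
by apply: funext => z; rewrite big_cons !mul1r.
Qed.

Lemma ev_sum (X : topologicalType) (m : {ptws SHM X -> RR}) (hm : HX X m)
  (I : Type) (l : seq I) (F : I -> X -> RR) a b :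
  (forall i, continuous (F i)) -> valid a b ->
  ev m (fun z => \sum_(i <- l) F i z) a b = \sum_(i <- l) ev m (F i) a b.
Proof.
move=> cF vab; elim: l => [|i l IH].
  rewrite (_ : (fun z => \sum_(i <- [::]) F i z) = fun _ => 0).
    by rewrite big_nil; exact: HX_cst.
  by apply: funext => z; rewrite big_nil.
rewrite (_ : (fun z => \sum_(j <- i :: l) F j z) = fun z => 1 * F i z + 1 * \sum_(j <- l) F j z).
  by rewrite HX_lin //; [rewrite IH big_cons !mul1r|exact: sum_cont].
by apply: funext => z; rewrite big_cons !mul1r.
Qed.

Definition pX (X : topologicalType) (x0 : X) : Type := X.
HB.instance Definition _ (X : topologicalType) (x0 : X) := Topological.copy (pX x0) X.
HB.instance Definition _ (X : topologicalType) (x0 : X) := isPointed.Build (pX x0) x0.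
Lemma cover_cpt (X : topologicalType) (x0 : X) : compact [set: X] -> @cover_compact X [set: X].
Proof.
move=> cX.
have : @cover_compact (pX x0) [set: pX x0] by rewrite -compact_cover; exact: cX.
by [].
Qed.

Lemma dir2 (X Y : topologicalType) (f : X -> Y) (hf : continuous f)
  (cX : compact [set: X]) (hX : hausdorff_space X)
  (cY : compact [set: Y]) (hY : hausdorff_space Y)
  (fopen : forall A : set X, open A -> open (f @` A))
  (nu : {ptws SHM Y -> RR}) (mu : {ptws SHM X -> RR})
  (hfib : [set m | HX X m /\ Hf hf m = nu] = [set mu]) :
  exists y x, f @^-1` [set y] = [set x].
Proof.
have [hmu hfmu] : HX X mu /\ Hf hf mu = nu.
  by have : [set mu] mu by []; rewrite -hfib.
have uniq : forall m, HX X m -> Hf hf m = nu -> m = mu.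
  move=> m h1 h2; have : [set m | HX X m /\ Hf hf m = nu] m by split.
  by rewrite hfib.
have v01 : valid 0 1 by split; [exact: lexx|exact: ltr01|exact: lexx].
have stepA : forall (psi : X -> RR) s, continuous psi -> (forall x, f (s x) = f x) ->
    continuous (psi \o s) -> forall a b, valid a b -> ev mu psi a b = ev mu (psi \o s) a b.
  move=> psi s cpsi fs cps a b vab.
  have [mu' [hmu' tw]] := twin cX hmu s.
  have e : mu' = mu.
    apply: uniq => //; rewrite -hfmu; apply: ev_ext => phi a' b' cphi vab'.
    rewrite !ev_Hf // (evE _ (conj (comp_cont hf cphi) vab')) (evE mu (conj (comp_cont hf cphi) vab')).
    apply: tw => alpha ha; rewrite /Hembed /= /avg; congr (_ * _); congr Rintegral.
    by apply: funext => t /=; rewrite fs.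
  rewrite (evE mu (conj cpsi vab)) (evE mu (conj cps vab)) -{1}e.
  by apply: tw.
have [//|H] := pselect (exists y x, f @^-1` [set y] = [set x]).
exfalso.
have twin_pt : forall x, exists2 x', x' != x & f x' = f x.
  move=> x; have [//|nh] := pselect (exists2 x', x' != x & f x' = f x).
  exfalso; apply: H; exists (f x), x; apply/seteqP; split => z /=; last by move=> ->.
  move=> fz; case: (eqVneq z x) => [//|nz]; exfalso; apply: nh; by exists z.
have osc : forall x, exists o : X -> RR,
    [/\ continuous o, (forall z, 0 <= o z), 1 < o x & ev mu o 0 1 = 0].
  move=> x; have [x' nx fx'] := twin_pt x.
  have dis : [set x] `&` [set x'] = set0.
    apply/seteqP; split => // z [/= zx zx']; move: nx; rewrite -zx' zx eqxx.
    by [].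
  have [u [cu u01 u0 u1]] := urysohn_RR hX cX (@closed_set1_h _ hX x) (@closed_set1_h _ hX x') dis.
  pose psi1 := fun z => 2 * u z.
  pose psi2 := fun z => -2 * u z.
  have c1 : continuous psi1 by exact: scale_cont.
  have c2 : continuous psi2 by exact: scale_cont.
  have [s1 hs1] := max_sel hf cX hY c1.
  have [s2 hs2] := max_sel hf cX hY c2.
  have cm1 := max_cont hf cX hY fopen c1 hs1.
  have cm2 := max_cont hf cX hY fopen c2 hs2.
  exists (fun z => 1 * (psi1 \o s1) z + 1 * (psi2 \o s2) z); split.
  - exact: lin_cont.
  - move=> z; have := (hs1 z).2 z erefl; have := (hs2 z).2 z erefl.
    rewrite /psi1 /psi2 /=; lra.
  - have := (hs1 x).2 x' fx'; have := (hs2 x).2 x erefl.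
    rewrite /psi1 /psi2 /= (u0 x erefl) (u1 x' erefl); lra.
  - have e1 := stepA psi1 s1 c1 (fun z => (hs1 z).1) cm1 0 1 v01.
    have e2 := stepA psi2 s2 c2 (fun z => (hs2 z).1) cm2 0 1 v01.
    rewrite HX_lin // -e1 -e2 -HX_lin //.
    rewrite (_ : (fun z => 1 * psi1 z + 1 * psi2 z) = fun _ => 0); first exact: HX_cst.
    by apply: funext => z; rewrite /psi1 /psi2; lra.
have [Of hO] : {Of : X -> X -> RR & forall x,
    [/\ continuous (Of x), (forall z, 0 <= Of x z), 1 < Of x x & ev mu (Of x) 0 1 = 0]}.
  exact: (@choice X (X -> RR) (fun x o => [/\ continuous o, (forall z, 0 <= o z), 1 < o x & ev mu o 0 1 = 0]) osc).
have [m0 [[alpha0 _ _] _]] := hmu setT filterT.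
have cc := cover_cpt (alpha0 0) cX.
have fsc : finite_subset_cover [set: X] (fun x => [set z | 1 < Of x z]) [set: X].
  apply: cc.
  - move=> x _; apply: (@open_comp _ _ (Of x) [set r : RR | 1 < r]); last exact: open_gt.
    by move=> z _; case: (hO x) => cO _ _ _; exact: cO.
  - by move=> z _; exists z => //; case: (hO z).
have [D0 _ hD'] := fsc.
pose D' := finmap.enum_fset D0.
have cO : forall x, continuous (Of x) by move=> x; case: (hO x).
have h1 : forall z, (fun _ => 1) z <= (fun z => \sum_(x <- D') Of x z) z.
  move=> z /=; have [x xD hx] := hD' z I.
  rewrite (big_rem x xD) /=.
  have : 0 <= \sum_(y <- rem x D') Of y z.
    by apply: sumr_ge0 => y _; case: (hO y).
  move: hx => /= hx; lra.
have cst1 : continuous (fun _ : X => (1 : RR)) by move=> z; exact: cvg_cst.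
have := HX_le hmu cst1 (sum_cont (l:=D') cO) v01 h1.
rewrite HX_cst // ev_sum // big1 => [|x _]; last by case: (hO x).
by rewrite ler10.
Qed.

Local Close Scope ring_scope.

Theorem lemma4p1 (X Y : topologicalType) (f : X -> Y) (hf : continuous f) :
  compact [set: X] -> hausdorff_space X ->
  compact [set: Y] -> hausdorff_space Y ->
  (forall y : Y, exists x : X, f x = y) ->
  (forall A : set X, open A -> open (f @` A)) ->
  ((exists nu, HX Y nu /\
      exists mu, [set m | HX X m /\ Hf hf m = nu] = [set mu])
   <->
   (exists y : Y, exists x : X, f @^-1` [set y] = [set x])).
Proof.
move=> cX hX cY hY fsurj fopen; split.
  move=> [nu [_ [mu hfib]]].
  exact: (dir2 cX hX cY hY fopen hfib).
move=> [y [x fib]].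
exact: (@dir1 X Y f hf cX cY hY y x fib).
Qed.
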